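(* Let $A,B\in\mathbb{C}^{m\times n}$. The following are equivalent: (a) $A\ *\!\!\le B$; (b) $A\le^{\diamond}B$ and $A^*A=A^*B$; (c) $A\le^{\diamond}B$ and $A^\dagger A=A^\dagger B$; (d) $A\le^{\diamond}B$ and $A^*B$ is Hermitian.
   Context: $M^*$ is the conjugate transpose, $M^\dagger$ the Moore–Penrose inverse, $\mathcal{R}(M)$ the column space. Left star order: $A\ *\!\!\le B$ iff $A^*A=A^*B$ and $\mathcal{R}(A)\subseteq\mathcal{R}(B)$. Diamond order: $A\le^{\diamond}B$ iff $\mathcal{R}(A)\subseteq\mathcal{R}(B)$, $\mathcal{R}(A^* )\subseteq\mathcal{R}(B^* )$, and $AB^*A=AA^*A$. *)

(* Defs.v *)
From HB Require Import structures.
From mathcomp Require Import all_boot all_order all_algebra.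
From Stdlib Require Import ClassicalEpsilon.
Set Implicit Arguments. Unset Strict Implicit. Unset Printing Implicit Defensive.
Import Order.TTheory GRing.Theory Num.Theory.
Local Open Scope ring_scope.

Section Defs.
Variable C : numClosedFieldType.

Definition ctrmx m n (M : 'M[C]_(m, n)) : 'M[C]_(n, m) := (map_mx Num.conj M)^T.

(* column space inclusion  R(A) ⊆ R(B)  (columns of A are combinations of columns of B) *)
Definition colspace_sub m n p (A : 'M[C]_(m, n)) (B : 'M[C]_(m, p)) : bool :=
  (A^T <= B^T)%MS.

Definition is_MP m n (A : 'M[C]_(m, n)) (X : 'M[C]_(n, m)) : Prop :=
  [/\ A *m X *m A = A, X *m A *m X = X,
      ctrmx (A *m X) = A *m X & ctrmx (X *m A) = X *m A].

(* Moore–Penrose inverse A^† (the unique solution of the Penrose equations) *)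
Definition mpinv m n (A : 'M[C]_(m, n)) : 'M[C]_(n, m) :=
  epsilon (inhabits 0) (is_MP A).

Definition left_star_le m n (A B : 'M[C]_(m, n)) : Prop :=
  ctrmx A *m A = ctrmx A *m B /\ colspace_sub A B.

Definition diamond_le m n (A B : 'M[C]_(m, n)) : Prop :=
  [/\ colspace_sub A B, colspace_sub (ctrmx A) (ctrmx B)
    & A *m ctrmx B *m A = A *m ctrmx A *m A].

Definition is_hermitian n (M : 'M[C]_n) : Prop := ctrmx M = M.
End Defs.

(* Main.v *)
Require Import Defs.
From HB Require Import structures.
From mathcomp Require Import all_boot all_order all_algebra.
From Stdlib Require Import ClassicalEpsilon.
Set Implicit Arguments. Unset Strict Implicit.
Import GRing.Theory Num.Theory.
Local Open Scope ring_scope.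

Section L.
Variable C : numClosedFieldType.

Lemma ctrmxK m n (M : 'M[C]_(m, n)) : ctrmx (ctrmx M) = M.
Proof. by apply/matrixP => i j; rewrite !mxE conjCK. Qed.

Lemma ctrmxM m n p (A : 'M[C]_(m, n)) (B : 'M[C]_(n, p)) :
  ctrmx (A *m B) = ctrmx B *m ctrmx A.
Proof. by rewrite /ctrmx map_mxM trmx_mul. Qed.

Lemma ctrmxD m n (A B : 'M[C]_(m, n)) : ctrmx (A + B) = ctrmx A + ctrmx B.
Proof. by apply/matrixP => i j; rewrite !mxE rmorphD. Qed.

Lemma ctrmxN m n (A : 'M[C]_(m, n)) : ctrmx (- A) = - ctrmx A.
Proof. by apply/matrixP => i j; rewrite !mxE rmorphN. Qed.

Lemma ctrmx0 m n : ctrmx (0 : 'M[C]_(m, n)) = 0.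
Proof. by apply/matrixP => i j; rewrite !mxE rmorph0. Qed.

Lemma ctrmx_inv n (P : 'M[C]_n) : ctrmx (invmx P) = invmx (ctrmx P).
Proof. by rewrite /ctrmx map_invmx trmx_inv. Qed.

Lemma mul_ctrmx_eq0 m n (M : 'M[C]_(m, n)) : M *m ctrmx M = 0 -> M = 0.
Proof.
move=> H; apply/matrixP => i j.
have := congr1 (fun N : 'M_m => N i i) H; rewrite !mxE.
under eq_bigr => k _ do rewrite !mxE -normCK.
move/psumr_eq0P => /(_ (fun k _ => exprn_ge0 2 (normr_ge0 _))) /(_ j isT).
by move/eqP; rewrite sqrf_eq0 normr_eq0 => /eqP.
Qed.

Lemma unit_gram r k (G : 'M[C]_(r, k)) : row_free G -> G *m ctrmx G \in unitmx.
Proof.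
move=> fG; rewrite -row_free_unit -kermx_eq0; apply/eqP.
set K := kermx _.
have HK : K *m (G *m ctrmx G) = 0 by apply: mulmx_ker.
have : (K *m G) *m ctrmx (K *m G) = 0.
  by rewrite ctrmxM !mulmxA -(mulmxA K) HK mul0mx.
move/mul_ctrmx_eq0 => KG; apply: (row_free_inj fG); by rewrite KG mul0mx.
Qed.

Lemma rank_ctrmx m n (M : 'M[C]_(m, n)) : \rank (ctrmx M) = \rank M.
Proof. by rewrite /ctrmx mxrank_tr mxrank_map. Qed.

Lemma MP_fact m n r (F : 'M[C]_(m, r)) (G : 'M[C]_(r, n)) :
  row_free (ctrmx F) -> row_free G ->
  is_MP (F *m G) (ctrmx G *m invmx (G *m ctrmx G) *m invmx (ctrmx F *m F) *m ctrmx F).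
Proof.
move=> fF fG.
set P := ctrmx F *m F; set Q := G *m ctrmx G.
have uP : P \in unitmx by rewrite /P -{2}(ctrmxK F); apply: unit_gram.
have uQ : Q \in unitmx by apply: unit_gram.
have hP : ctrmx P = P by rewrite /P ctrmxM ctrmxK.
have hQ : ctrmx Q = Q by rewrite /Q ctrmxM ctrmxK.
have AX : F *m G *m (ctrmx G *m invmx Q *m invmx P *m ctrmx F) = F *m invmx P *m ctrmx F.
  rewrite -!mulmxA; congr (F *m _).
  by rewrite mulmxA mulmxA mulmxV // mul1mx.
have XA : (ctrmx G *m invmx Q *m invmx P *m ctrmx F) *m (F *m G) = ctrmx G *m invmx Q *m G.
  rewrite !mulmxA; congr (_ *m G).
  by rewrite -mulmxA -mulmxA mulVmx // mulmx1.
split.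
- rewrite AX -!mulmxA; congr (F *m _).
  by rewrite [ctrmx F *m _]mulmxA -/P mulmxA mulVmx // mul1mx.
- rewrite XA -!mulmxA; congr (ctrmx G *m _); congr (invmx Q *m _).
  by rewrite mulmxA -/Q mulmxA mulmxV // mul1mx.
- by rewrite AX !ctrmxM ctrmxK ctrmx_inv hP mulmxA.
- by rewrite XA !ctrmxM ctrmxK ctrmx_inv hQ mulmxA.
Qed.

Lemma MP_exists m n (A : 'M[C]_(m, n)) : exists X, is_MP A X.
Proof.
have fF : row_free (ctrmx (col_base A)).
  by rewrite /row_free rank_ctrmx; have := col_base_full A.
have := MP_fact fF (row_base_free A); rewrite mulmx_base => H.
by eexists; exact: H.
Qed.

Lemma mpinvP m n (A : 'M[C]_(m, n)) : is_MP A (mpinv A).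
Proof. by rewrite /mpinv; apply: epsilon_spec; apply: MP_exists. Qed.

End L.

Theorem theorem4p2 (C : numClosedFieldType) (m n : nat) (A B : 'M[C]_(m, n)) :
  [<-> left_star_le A B;
       diamond_le A B /\ ctrmx A *m A = ctrmx A *m B;
       diamond_le A B /\ mpinv A *m A = mpinv A *m B;
       diamond_le A B /\ is_hermitian (ctrmx A *m B)].
Proof.
set X := mpinv A.
have [AXA XAX hAX hXA] := mpinvP A; rewrite -/X in AXA XAX hAX hXA.
have E1 : ctrmx A = ctrmx A *m A *m X.
  by rewrite -{1}AXA ctrmxM hAX mulmxA.
have E2 : X = X *m ctrmx X *m ctrmx A.
  by rewrite -{1}XAX -mulmxA -hAX ctrmxM mulmxA.
have E2' Y : X *m Y = X *m ctrmx X *m (ctrmx A *m Y).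
  by rewrite [RHS]mulmxA -E2.
have hermAA : ctrmx (ctrmx A *m A) = ctrmx A *m A by rewrite ctrmxM ctrmxK.
tfae.
- case => H1 H2.
  have H3 : ctrmx B *m A = ctrmx A *m A.
    by rewrite -[Z in ctrmx B *m Z]ctrmxK -ctrmxM -H1 hermAA.
  split => //; split => //.
    by rewrite /colspace_sub E1 -H3 -mulmxA trmx_mul submxMl.
  by rewrite -!mulmxA H3.
- case => D H; split => //.
  by rewrite (E2' _ A) (E2' _ B) H.
- case => D H; split => //; rewrite /is_hermitian.
  have -> : ctrmx A *m B = ctrmx A *m A by rewrite E1 -!mulmxA -H.
  exact: hermAA.
- case => [[c1 c2 c3] H]; split => //.
  move: H; rewrite /is_hermitian ctrmxM ctrmxK => H.
  set D := A - B; set M := ctrmx D *m A.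
  have hM : ctrmx M = M.
    by rewrite /M ctrmxM ctrmxK /D ctrmxD ctrmxN mulmxBr mulmxBl H.
  have ADA : A *m ctrmx D *m A = 0.
    by rewrite /D ctrmxD ctrmxN mulmxBr mulmxBl c3 subrr.
  have M0 : M = 0.
    apply: mul_ctrmx_eq0.
    by rewrite hM /M -!mulmxA [A *m (ctrmx D *m A)]mulmxA ADA mulmx0.
  have : ctrmx M = 0 by rewrite M0 ctrmx0.
  rewrite /M ctrmxM ctrmxK /D mulmxBr => /eqP; rewrite subr_eq0 => /eqP.
  done.
Qed.
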